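(* Let $G=G_1\rtimes G_2$ be a finite group, where $G_1$ is a normal subgroup of $G$ and $G_2$ is a subgroup with $G_1\cap G_2=\{1\}$ and $G=G_1G_2$. If $\gcd\{|G_1|,|G_2|\}=1$, then the map $B_0(G)\to B_0(G_1)^{G_2}\times B_0(G_2)$ whose components are the restriction maps to $G_1$ and to $G_2$ is a group isomorphism.
   Context: For a finite group $G$, $\mathbf{Q}/\mathbf{Z}$ denotes the $\mathbf{Z}[G]$-module with trivial $G$-action. A group is bicyclic if it is cyclic or a direct product of two cyclic groups. The Bogomolov multiplier is $B_0(G)=\bigcap_A \operatorname{Ker}\{\operatorname{res}_G^A: H^2(G,\mathbf{Q}/\mathbf{Z})\to H^2(A,\mathbf{Q}/\mathbf{Z})\}$, $A$ running over all bicyclic subgroups of $G$. For $N\lhd G$, $G$ acts on $H^2(N,\mathbf{Q}/\mathbf{Z})$ by conjugation: for a 2-cocycle $\alpha$ and $g\in G$, $({}^g\alpha)(\tau_1,\tau_2)=\alpha(g^{-1}\tau_1g,g^{-1}\tau_2g)$; this action preserves $B_0(N)$, and $B_0(N)^{G_2}$ denotes the elements of $B_0(N)$ fixed by all $g\in G_2$. The restriction map sends $B_0(G)$ into $B_0(G_1)^{G_2}$ and into $B_0(G_2)$. *)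

(* Defs.v *)
From mathcomp Require Import all_boot all_order all_algebra all_fingroup all_solvable.
Set Implicit Arguments. Unset Strict Implicit. Unset Printing Implicit Defensive.
Import GRing.Theory Num.Theory.
Local Open Scope ring_scope.

(* Q/Z with trivial action: values in rat, compared modulo the integers. *)
Definition qz_eq (x y : rat) : Prop := (x - y) \is a Num.int.

Section Cohomology.
Variable gT : finGroupType.
Local Open Scope group_scope.

(* inhomogeneous 2-cochains G x G -> Q/Z are represented by functions gT -> gT -> rat;
   only their values on H x H matter when working over the subgroup H. *)
Definition cocycle2 (H : {set gT}) (a : gT -> gT -> rat) : Prop :=
  forall x y z, x \in H -> y \in H -> z \in H ->
    qz_eq (a y z - a (x * y)%g z + a x (y * z)%g - a x y)%R 0%R.

Definition coboundary2 (H : {set gT}) (a : gT -> gT -> rat) : Prop :=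
  exists f : gT -> rat, forall x y, x \in H -> y \in H ->
    qz_eq (a x y) (f y - f (x * y)%g + f x)%R.

Definition cohomologous (H : {set gT}) (a b : gT -> gT -> rat) : Prop :=
  coboundary2 H (fun x y => a x y - b x y)%R.

Definition bicyclic (A : {group gT}) : Prop :=
  cyclic A \/ exists B C : {group gT}, [/\ cyclic B, cyclic C & B \x C = A].

Definition inB0 (H : {set gT}) (a : gT -> gT -> rat) : Prop :=
  forall A : {group gT}, A \subset H -> bicyclic A -> coboundary2 A a.

Definition conj_cochain (g : gT) (a : gT -> gT -> rat) : gT -> gT -> rat :=
  fun t1 t2 => a (t1 ^ g) (t2 ^ g).

Definition fixed_class (N K : {set gT}) (a : gT -> gT -> rat) : Prop :=
  forall g, g \in K -> cohomologous N (conj_cochain g a) a.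

End Cohomology.

(* Main.v *)
Require Import Defs.
From mathcomp Require Import all_boot all_order all_algebra all_fingroup all_solvable.
From mathcomp Require Import ring.
Set Implicit Arguments. Unset Strict Implicit. Unset Printing Implicit Defensive.
Import GRing.Theory Num.Theory.

Ltac zint := solve [repeat first [assumption | apply: rpredD | apply: rpredB | rewrite rpredN | apply: rpredM | apply: rpred_int | apply: rpred_sum => ? ?]].

Section Lay1.
Variable gT : finGroupType.
Local Open Scope ring_scope.
Implicit Types (H K : {set gT}) (a b : gT -> gT -> rat) (f : gT -> rat).

Lemma qz_int x y : qz_eq x y -> (x - y) \is a Num.int. Proof. by []. Qed.

Lemma cb_ext H a b : (forall x y, x \in H -> y \in H -> qz_eq (a x y) (b x y)) ->
  coboundary2 H a -> coboundary2 H b.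
Proof.
move=> E [f Hf]; exists f => x y Hx Hy.
have := E x y Hx Hy; have := Hf x y Hx Hy; rewrite /qz_eq => h1 h2.
have -> : b x y - (f y - f (x * y)%g + f x) =
  (a x y - (f y - f (x * y)%g + f x)) - (a x y - b x y) by ring.
by rewrite rpredB.
Qed.

Lemma cb_add H a b : coboundary2 H a -> coboundary2 H b ->
  coboundary2 H (fun x y => a x y + b x y).
Proof.
move=> [f Hf] [g Hg]; exists (fun x => f x + g x) => x y Hx Hy.
have := Hf x y Hx Hy; have := Hg x y Hx Hy; rewrite /qz_eq => h1 h2.
have -> : a x y + b x y - (f y + g y - (f (x * y)%g + g (x * y)%g) + (f x + g x)) =
  (a x y - (f y - f (x * y)%g + f x)) + (b x y - (g y - g (x * y)%g + g x)) by ring.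
by rewrite rpredD.
Qed.

Lemma cb_scale H a (k : int) : coboundary2 H a ->
  coboundary2 H (fun x y => k%:~R * a x y).
Proof.
move=> [f Hf]; exists (fun x => k%:~R * f x) => x y Hx Hy.
have := Hf x y Hx Hy; rewrite /qz_eq => h1.
have -> : k%:~R * a x y - (k%:~R * f y - k%:~R * f (x * y)%g + k%:~R * f x) =
  k%:~R * (a x y - (f y - f (x * y)%g + f x)) by ring.
by rewrite rpredM // rpred_int.
Qed.

Lemma cb_subset H K a : K \subset H -> coboundary2 H a -> coboundary2 K a.
Proof. by move=> sKH [f Hf]; exists f => x y Kx Ky; apply: Hf; apply: (subsetP sKH). Qed.

Lemma cb_coprime H a (m n : nat) : coprime m n ->
  coboundary2 H (fun x y => m%:R * a x y) -> coboundary2 H (fun x y => n%:R * a x y) ->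
  coboundary2 H a.
Proof.
move=> cop hm hn; have [u [v Euv]] := Bezoutz m n.
have g1 : gcdz m n = 1 by rewrite /gcdz /= (eqP cop).
have := cb_add (cb_scale u hm) (cb_scale v hn); apply: cb_ext => x y _ _.
have -> : u%:~R * (m%:R * a x y) + v%:~R * (n%:R * a x y) = ((u * m + v * n)%:~R * a x y :> rat).
  by rewrite intrD !intrM /=; ring.
by rewrite Euv g1 mul1r /qz_eq subrr.
Qed.

Definition cexp a (x y z : gT) := a y z - a (x * y)%g z + a x (y * z)%g - a x y.

Lemma ccE (H : {set gT}) a : cocycle2 H a <->
  forall x y z, x \in H -> y \in H -> z \in H -> cexp a x y z \is a Num.int.
Proof. by split=> h x y z Hx Hy Hz; have := h x y z Hx Hy Hz; rewrite /qz_eq subr0. Qed.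

Definition dcb f (x y : gT) := f y - f (x * y)%g + f x.

Lemma cexp_dcb f x y z : cexp (dcb f) x y z = 0.
Proof. rewrite /cexp /dcb mulgA; ring. Qed.

Lemma cc_ext (H : {group gT}) a b : (forall x y, x \in H -> y \in H -> qz_eq (a x y) (b x y)) ->
  cocycle2 H a -> cocycle2 H b.
Proof.
move=> E /ccE ca; apply/ccE => x y z Hx Hy Hz; have := ca x y z Hx Hy Hz.
have Hxy := groupM Hx Hy; have Hyz := groupM Hy Hz.
have := E _ _ Hy Hz; have := E _ _ Hxy Hz; have := E _ _ Hx Hyz; have := E _ _ Hx Hy.
rewrite /qz_eq /cexp => e1 e2 e3 e4 e5.
have -> : b y z - b (x * y)%g z + b x (y * z)%g - b x y =
  (a y z - a (x * y)%g z + a x (y * z)%g - a x y) - (a y z - b y z)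
  + (a (x * y)%g z - b (x * y)%g z) - (a x (y * z)%g - b x (y * z)%g) + (a x y - b x y) by ring.
zint.
Qed.

Lemma cc_add (H : {set gT}) a b : cocycle2 H a -> cocycle2 H b ->
  cocycle2 H (fun x y => a x y + b x y).
Proof.
move=> /ccE ca /ccE cb; apply/ccE => x y z Hx Hy Hz.
have -> : cexp (fun x y => a x y + b x y) x y z = cexp a x y z + cexp b x y z.
  by rewrite /cexp; ring.
by rewrite rpredD ?ca ?cb.
Qed.

Lemma cc_scale (H : {set gT}) a (k : int) : cocycle2 H a ->
  cocycle2 H (fun x y => k%:~R * a x y).
Proof.
move=> /ccE ca; apply/ccE => x y z Hx Hy Hz.
have -> : cexp (fun x y => k%:~R * a x y) x y z = k%:~R * cexp a x y z.
  by rewrite /cexp; ring.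
by rewrite rpredM ?ca ?rpred_int.
Qed.

Lemma cc_dcb (H : {set gT}) a f : cocycle2 H a ->
  cocycle2 H (fun x y => a x y - dcb f x y).
Proof.
move=> /ccE ca; apply/ccE => x y z Hx Hy Hz.
have -> : cexp (fun x y => a x y - dcb f x y) x y z = cexp a x y z - cexp (dcb f) x y z.
  by rewrite /cexp; ring.
by rewrite cexp_dcb subr0 ca.
Qed.

Lemma cc_subset (H K : {set gT}) a : K \subset H -> cocycle2 H a -> cocycle2 K a.
Proof. by move=> sKH ca x y z Kx Ky Kz; apply: ca; apply: (subsetP sKH). Qed.

Lemma cbE (H : {set gT}) a : coboundary2 H a <->
  exists f, forall x y, x \in H -> y \in H -> a x y - dcb f x y \is a Num.int.
Proof. by []. Qed.

End Lay1.


Section Lay2.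
Variable gT : finGroupType.
Local Open Scope group_scope.
Local Open Scope ring_scope.

Lemma sum_cexp (I : finType) (P : {set I}) (r : I -> gT) (d : gT -> gT -> rat) y z :
  \sum_(i in P) cexp d (r i) y z = d y z *+ #|P| - \sum_(i in P) d (r i * y)%g z
     + \sum_(i in P) d (r i) (y * z)%g - \sum_(i in P) d (r i) y.
Proof. by rewrite /cexp !sumrB big_split /= sumrB sumr_const. Qed.

Lemma cb_index (K H : {group gT}) a : H \subset K -> cocycle2 K a -> coboundary2 H a ->
  coboundary2 K (fun x y => (#|K : H|%g)%:R * a x y).
Proof.
move=> sHK cKa [phi Hphi].
pose d0 x y := a x y - dcb phi x y.
have cd0 : cocycle2 K d0 by apply: cc_dcb.
have Hd0 : forall x y, x \in H -> y \in H -> d0 x y \is a Num.int.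
  by move=> x y Hx Hy; have := Hphi x y Hx Hy.
pose rho x := repr (H :* x).
pose hh x := (x * (rho x)^-1)%g.
have rhoH x : (rho x * x^-1)%g \in H by rewrite -mem_rcoset mem_repr_rcoset.
have hhH x : hh x \in H by rewrite /hh -[x in (x * _)%g]invgK -invMg groupV.
have rhoK x : x \in K -> rho x \in K.
  move=> Kx; rewrite -[rho x](mulgKV x) groupM //; exact: (subsetP sHK).
have rhoM h x : h \in H -> rho (h * x)%g = rho x by move=> Hh; rewrite /rho rcosetM rcoset_id.
have rho1 h : h \in H -> rho h = 1%g by move=> Hh; rewrite /rho rcoset_id // repr_group.
have hhx x : (hh x * rho x)%g = x by rewrite /hh mulgKV.
pose f x := - d0 (hh x) (rho x).
pose d1 x y := d0 x y - dcb f x y.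
have cd1 : cocycle2 K d1 by apply: cc_dcb.
have cl1 : forall h x, h \in H -> x \in K -> d1 h x \is a Num.int.
  move=> h x Hh Kx; have Kh := subsetP sHK h Hh.
  have := (ccE _ _).1 cd0 h (hh x) (rho x) Kh (subsetP sHK _ (hhH x)) (rhoK x Kx).
  rewrite /cexp hhx => e1.
  have e2 := Hd0 _ _ Hh (hhH x).
  have e3 : d0 (hh h) (rho h) \is a Num.int by rewrite rho1 // Hd0 ?group1.
  have -> : d1 h x = (d0 (hh x) (rho x) - d0 (h * hh x)%g (rho x) + d0 h x - d0 h (hh x))
       + d0 h (hh x) + d0 (hh h) (rho h).
    rewrite /d1 /dcb /f rhoM // [hh (h * x)%g]/hh rhoM // -mulgA.
    rewrite -/(hh x); ring.
  zint.
have cl2 : forall h x y, h \in H -> x \in K -> y \in K -> d1 (h * x)%g y - d1 x y \is a Num.int.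
  move=> h x y Hh Kx Ky; have Kh := subsetP sHK h Hh.
  have e1 := (ccE _ _).1 cd1 h x y Kh Kx Ky.
  have e2 := cl1 h x Hh Kx; have e3 := cl1 h (x * y)%g Hh (groupM Kx Ky).
  have -> : d1 (h * x)%g y - d1 x y = - cexp d1 h x y + d1 h (x * y)%g - d1 h x by rewrite /cexp; ring.
  zint.
pose F y := \sum_(C in rcosets H K) d1 (repr C) y.
have reprK C : C \in rcosets H K -> repr C \in K.
  by case/rcosetsP=> x0 Kx0 ->; rewrite -[repr _](mulgKV x0) groupM // (subsetP sHK) // -mem_rcoset mem_repr_rcoset.
have cl3 : forall y z, y \in K -> z \in K ->
    (#|K : H|%g)%:R * d1 y z - dcb F y z \is a Num.int.
  move=> y z Ky Kz.
  have S1 : \sum_(C in rcosets H K) cexp d1 (repr C) y z \is a Num.int.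
    by apply: rpred_sum => C /reprK KC; apply: ((ccE _ _).1 cd1).
  have S2 : \sum_(C in rcosets H K) (d1 (repr C * y)%g z - d1 (repr (C :* y)) z) \is a Num.int.
    apply: rpred_sum => C RC; have KC := reprK C RC.
    have RCy : C :* y \in rcosets H K.
      by case/rcosetsP: RC => x0 Kx0 ->; rewrite -rcosetM mem_rcosets (mulSGid sHK) groupM.
    have KCy := reprK _ RCy.
    case/rcosetsP: RC => x0 Kx0 defC.
    set h := (repr C * y * (repr (C :* y))^-1)%g.
    have Hh : h \in H.
      have h1 : (repr C * x0^-1)%g \in H by rewrite -mem_rcoset defC mem_repr_rcoset.
      have h2 : (repr (C :* y) * (x0 * y)^-1)%g \in H by rewrite -mem_rcoset defC -rcosetM mem_repr_rcoset.
      have -> : h = ((repr C * x0^-1) * (repr (C :* y) * (x0 * y)^-1)^-1)%g.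
        by rewrite /h !invMg !invgK !mulgA mulgKV.
      by rewrite groupM ?groupV.
    have -> : (repr C * y)%g = (h * repr (C :* y))%g by rewrite /h mulgKV.
    exact: cl2.
  have S3 : \sum_(C in rcosets H K) d1 (repr (C :* y)) z = F z.
    rewrite /F (@reindex_acts _ _ _ 'Rs _ _ _ _ _ y (fun C => d1 (repr C) z) (actsRs_rcosets H K) Ky); by apply: eq_bigr => C _ /=; rewrite ?rcosetE.
  have E1 : \sum_(C in rcosets H K) cexp d1 (repr C) y z =
      (#|K : H|%g)%:R * d1 y z - \sum_(C in rcosets H K) d1 (repr C * y)%g z + F (y * z)%g - F y.
    by rewrite sum_cexp mulr_natl.
  have E2 : \sum_(C in rcosets H K) (d1 (repr C * y)%g z - d1 (repr (C :* y)) z) =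
      \sum_(C in rcosets H K) d1 (repr C * y)%g z - F z by rewrite sumrB S3.
  have -> : (#|K : H|%g)%:R * d1 y z - dcb F y z =
     \sum_(C in rcosets H K) cexp d1 (repr C) y z +
     \sum_(C in rcosets H K) (d1 (repr C * y)%g z - d1 (repr (C :* y)) z).
    by rewrite E1 E2 /dcb; ring.
  by rewrite rpredD.
exists (fun x => (#|K : H|%g)%:R * phi x + (#|K : H|%g)%:R * f x + F x) => x y Kx Ky.
rewrite /qz_eq.
have -> : (#|K : H|%g)%:R * a x y - ((#|K : H|%g)%:R * phi y + (#|K : H|%g)%:R * f y + F y -
  ((#|K : H|%g)%:R * phi (x * y)%g + (#|K : H|%g)%:R * f (x * y)%g + F (x * y)%g) +
  ((#|K : H|%g)%:R * phi x + (#|K : H|%g)%:R * f x + F x)) =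
  (#|K : H|%g)%:R * d1 x y - dcb F x y by rewrite /d1 /d0 /dcb; ring.
exact: cl3.
Qed.
End Lay2.


Section Bicyc.
Variable gT : finGroupType.
Local Open Scope group_scope.

Lemma rank_cyclic (B : {group gT}) : cyclic B -> 'r(B) <= 1.
Proof. by move=> cB; rewrite -abelian_rank1_cyclic ?cyclic_abelian. Qed.

Lemma bicyclic_rank (A : {group gT}) : bicyclic A -> abelian A /\ 'r(A) <= 2.
Proof.
case=> [cA | [B [C [cB cC defA]]]].
  by split; [exact: cyclic_abelian | exact: leq_trans (rank_cyclic cA) _].
have aA : abelian A.
  case/dprodP: defA => _ <- cBC _; rewrite abelianM cBC.
  by rewrite !cyclic_abelian.
split=> //; have [p _ ->] := rank_witness A.
rewrite -(p_rank_dprod p defA).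
rewrite -[2]/(1 + 1)%N; apply: leq_add; apply: leq_trans (p_rank_le_rank p _) _; exact: rank_cyclic.
Qed.

Lemma rank_bicyclic (A : {group gT}) : abelian A -> 'r(A) <= 2 -> bicyclic A.
Proof.
move=> aA rA; have [b defA tA] := abelian_structure aA.
have sb : size b <= 2 by rewrite -(size_map order) tA size_abelian_type.
case: b sb defA {tA} => [|x [|y [|]]] // _.
- by rewrite big_nil => defA; left; rewrite -defA; exact: cyclic1.
- by rewrite big_cons big_nil dprodg1 => defA; left; rewrite -defA; exact: cycle_cyclic.
- rewrite !big_cons big_nil dprodg1 => defA; right.
  by exists <[x]>%G, <[y]>%G; split; rewrite ?cycle_cyclic.
Qed.

Lemma bicyclicS (A B : {group gT}) : B \subset A -> bicyclic A -> bicyclic B.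
Proof.
move=> sBA /bicyclic_rank [aA rA]; apply: rank_bicyclic; first exact: abelianS aA.
exact: leq_trans (rankS sBA) rA.
Qed.

Lemma bicyclic_morphim (D : {group gT}) (f : {morphism D >-> gT}) (A : {group gT}) :
  bicyclic A -> bicyclic (f @* A)%G.
Proof.
move=> /bicyclic_rank [aA rA]; apply: rank_bicyclic; first exact: morphim_abelian.
exact: leq_trans (morphim_rank_abelian f aA) rA.
Qed.

End Bicyc.


Section Lay4.
Variable gT : finGroupType.
Local Open Scope group_scope.
Local Open Scope ring_scope.

Lemma cc_sum (H : {set gT}) (P : {set gT}) (F : gT -> gT -> gT -> rat) :
  (forall i, i \in P -> cocycle2 H (F i)) -> cocycle2 H (fun x y => \sum_(i in P) F i x y).
Proof.
move=> cF; apply/ccE => x y z Hx Hy Hz.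
have -> : cexp (fun x y => \sum_(i in P) F i x y) x y z = \sum_(i in P) cexp (F i) x y z.
  by rewrite /cexp [RHS]sumrB big_split /= sumrB.
by apply: rpred_sum => i Pi; apply: ((ccE _ _).1 (cF i Pi)).
Qed.

Lemma cb_sum (H : {set gT}) (P : {set gT}) (F : gT -> gT -> gT -> rat) :
  (forall i, i \in P -> coboundary2 H (F i)) -> coboundary2 H (fun x y => \sum_(i in P) F i x y).
Proof.
move=> cF.
have : forall i, exists f, i \in P -> coboundary2 H (F i) /\ 
   forall x y, x \in H -> y \in H -> F i x y - dcb f x y \is a Num.int.
  move=> i; case: (boolP (i \in P)) => Pi; last by exists (fun _ => 0).
  by have [f Hf] := cF i Pi; exists f => _; split => //; exists f.
case/fin_all_exists => g Hg.
exists (fun x => \sum_(i in P) g i x) => x y Hx Hy; rewrite /qz_eq.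
have -> : \sum_(i in P) F i x y - (\sum_(i in P) g i y - \sum_(i in P) g i (x * y)%g + \sum_(i in P) g i x)
   = \sum_(i in P) (F i x y - dcb (g i) x y).
  by rewrite /dcb [RHS]sumrB big_split /= sumrB.
by apply: rpred_sum => i Pi; case: (Hg i Pi) => _; apply.
Qed.

Lemma sum_mulr (K : {group gT}) (h : gT -> rat) y : y \in K ->
  \sum_(x in K) h (x * y)%g = \sum_(x in K) h x.
Proof.
move=> Ky; rewrite [RHS](reindex_inj (mulIg y)); apply: eq_bigl => x.
by rewrite groupMr.
Qed.

Lemma sum_mull (K : {group gT}) (h : gT -> rat) y : y \in K ->
  \sum_(x in K) h (y * x)%g = \sum_(x in K) h x.
Proof.
move=> Ky; rewrite [RHS](reindex_inj (mulgI y)); apply: eq_bigl => x.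
by rewrite groupMl.
Qed.

Definition psi0 (K : {set gT}) (a : gT -> gT -> rat) (y : gT) : rat := \sum_(x in K) a x y.

Lemma cb_order (K : {group gT}) a : cocycle2 K a ->
  forall y z, y \in K -> z \in K -> (#|K|)%:R * a y z - dcb (psi0 K a) y z \is a Num.int.
Proof.
move=> cKa y z Ky Kz.
have S1 : \sum_(x in K) cexp a x y z \is a Num.int.
  by apply: rpred_sum => x Kx; apply: ((ccE _ _).1 cKa).
have -> : (#|K|)%:R * a y z - dcb (psi0 K a) y z = \sum_(x in K) cexp a x y z => //.
rewrite sum_cexp (sum_mulr (fun x => a x z) Ky) /dcb /psi0 -mulr_natl; ring.
Qed.

Lemma conj_cb (G N : {group gT}) a g : N \subset G -> g \in G -> cocycle2 G a ->
  coboundary2 N (fun x y => a (x ^ g)%g (y ^ g)%g - a x y).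
Proof.
move=> sNG Gg /ccE cGa; exists (fun z => a g (z ^ g)%g - a z g) => x y Nx Ny.
have Gx := subsetP sNG x Nx; have Gy := subsetP sNG y Ny.
have Gxg : (x ^ g)%g \in G by rewrite groupJ. have Gyg : (y ^ g)%g \in G by rewrite groupJ.
have I1 := cGa _ _ _ Gg Gxg Gyg.
have I2 := cGa _ _ _ Gx Gg Gyg.
have I3 := cGa _ _ _ Gx Gy Gg.
move: I1 I2 I3; rewrite /cexp -!conjgC -conjMg => I1 I2 I3.
rewrite /qz_eq.
have -> : a (x ^ g)%g (y ^ g)%g - a x y - (a g (y ^ g)%g - a y g - (a g ((x * y) ^ g)%g - a (x * y)%g g) + (a g (x ^ g)%g - a x g))
  = (a (x ^ g)%g (y ^ g)%g - a (x * g)%g (y ^ g)%g + a g ((x * y) ^ g)%g - a g (x ^ g)%g)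
   - (a g (y ^ g)%g - a (x * g)%g (y ^ g)%g + a x (y * g)%g - a x g)
   + (a y g - a (x * y)%g g + a x (y * g)%g - a x y) by ring.
zint.
Qed.

Lemma cc_diff (H : {set gT}) a b : cocycle2 H a -> cocycle2 H b ->
  cocycle2 H (fun x y => a x y - b x y).
Proof.
move=> /ccE ca /ccE cb; apply/ccE => x y z Hx Hy Hz.
have -> : cexp (fun x y => a x y - b x y) x y z = cexp a x y z - cexp b x y z.
  by rewrite /cexp; ring.
by rewrite rpredB ?ca ?cb.
Qed.

Lemma cb_const (H : {set gT}) (k : rat) : coboundary2 H (fun _ _ => k).
Proof. by exists (fun _ => k) => x y _ _; rewrite /qz_eq (_ : k - (k - k + k) = 0) //; ring. Qed.

Lemma sum_lin (P : {set gT}) (k : rat) (A B C D : gT -> rat) :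
  \sum_(i in P) (k * A i - (B i - C i + D i)) =
  k * \sum_(i in P) A i - (\sum_(i in P) B i - \sum_(i in P) C i + \sum_(i in P) D i).
Proof. by rewrite sumrB big_split sumrB /= -mulr_sumr. Qed.

End Lay4.


Section Main.
Variable gT : finGroupType.
Variables G G1 G2 : {group gT}.
Local Open Scope group_scope.
Hypotheses (nG1G : G1 <| G) (sG2G : G2 \subset G) (tiG12 : G1 :&: G2 = 1%g)
  (defG : (G1 * G2)%g = G) (cop : coprime #|G1| #|G2|).
Local Open Scope group_scope.

Let sG1G : G1 \subset G := normal_sub nG1G.
Let nG1 : G \subset 'N(G1) := normal_norm nG1G.

Lemma cardG12 : #|G| = (#|G1| * #|G2|)%N.
Proof. by rewrite -defG TI_cardMg. Qed.

Lemma idx1 : #|G : G1| = #|G2|.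
Proof.
apply/eqP; rewrite -(eqn_pmul2l (cardG_gt0 G1)) Lagrange //; exact/eqP/cardG12.
Qed.

Lemma idx2 : #|G : G2| = #|G1|.
Proof.
apply/eqP; rewrite -(eqn_pmul2l (cardG_gt0 G2)) Lagrange // mulnC; exact/eqP/cardG12.
Qed.

Local Open Scope ring_scope.

Lemma part2 a b : cocycle2 G a -> cocycle2 G b ->
  coboundary2 G1 (fun x y => a x y - b x y) -> coboundary2 G2 (fun x y => a x y - b x y) ->
  coboundary2 G (fun x y => a x y - b x y).
Proof.
move=> ca cb h1 h2; have cd := cc_diff ca cb.
have e1 := cb_index sG1G cd h1; have e2 := cb_index sG2G cd h2.
rewrite idx1 in e1; rewrite idx2 in e2.
exact: cb_coprime cop e2 e1.
Qed.

Definition xg := locked (divgr G1 G2).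
Definition sg := locked (remgr G1 G2).
Lemma xgE : xg = divgr G1 G2. Proof. by rewrite /xg -lock. Qed.
Lemma sgE : sg = remgr G1 G2. Proof. by rewrite /sg -lock. Qed.

Let complG2 : G2 \in [complements to G1 in G].
Proof. by apply/complP. Qed.

Lemma mem_xg g : g \in G -> xg g \in G1.
Proof. by move=> Gg; rewrite xgE; apply: mem_divgr; rewrite defG. Qed.
Lemma mem_sg g : g \in G -> sg g \in G2.
Proof. by move=> Gg; rewrite sgE; apply: mem_remgr; rewrite defG. Qed.

Lemma sgM : {in G &, {morph sg : x y / (x * y)%g}}.
Proof. rewrite sgE; exact: remgrM complG2 nG1G. Qed.

Lemma memJ1 x s : x \in G1 -> s \in G2 -> (x ^ s)%g \in G1.
Proof. by move=> Hx Hs; rewrite memJ_norm // (subsetP nG1) // (subsetP sG2G). Qed.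

Lemma semi_id (x1 s1 x2 s2 : gT) :
  ((x1 * s1) * (x2 * s2))%g = ((x1 * x2 ^ s1^-1) * (s1 * s2))%g.
Proof. by rewrite conjgE invgK !mulgA mulgKV. Qed.

Lemma xgM g h : g \in G -> h \in G -> xg (g * h)%g = (xg g * (xg h) ^ (sg g)^-1)%g.
Proof.
move=> Gg Gh.
have -> : (g * h)%g = ((xg g * (xg h) ^ (sg g)^-1) * (sg g * sg h))%g.
  have E : (g * h)%g = ((xg g * sg g) * (xg h * sg h))%g by rewrite xgE sgE -!divgr_eq.
  by rewrite E semi_id.
rewrite {1}xgE divgrMid //; last by rewrite groupM ?mem_sg.
by rewrite groupM ?mem_xg // memJ1 ?mem_xg ?groupV ?mem_sg.
Qed.

Lemma xg1 x : x \in G1 -> xg x = x. Proof. rewrite xgE; exact: divgr_id. Qed.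
Lemma sg1 x : x \in G1 -> sg x = 1%g. Proof. rewrite sgE; exact: remgr1. Qed.
Lemma sg2 s : s \in G2 -> sg s = s. Proof. rewrite sgE; exact: remgr_id. Qed.
Lemma xg2 s : s \in G2 -> xg s = 1%g.
Proof. by move=> Hs; rewrite xgE /divgr -sgE sg2 // mulgV. Qed.

Section Surj.
Variables (b c : gT -> gT -> rat).
Hypotheses (cb : cocycle2 G1 b) (b0 : inB0 G1 b) (fb : fixed_class G1 G2 b)
  (cc : cocycle2 G2 c) (c0 : inB0 G2 c).

Let uv := Bezoutz #|G2| #|G1|.
Let u := projT1 uv.
Let v := projT1 (projT2 uv).

Lemma Euv : (u%:~R * (#|G2|)%:R + v%:~R * (#|G1|)%:R = 1 :> rat).
Proof.
have : u * #|G2| + v * #|G1| = 1 :> int.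
  rewrite /u /v; case: uv => u0 [v0 E] /=; rewrite E /gcdz /=.
  by have := cop; rewrite coprime_sym => /eqP ->.
by move/(congr1 (fun z : int => z%:~R : rat)); rewrite intrD !intrM.
Qed.

Definition bt x y := \sum_(s in G2) b (x ^ s)%g (y ^ s)%g.
Definition b2 x y := u%:~R * bt x y.
Definition Psi y := u%:~R * \sum_(s in G2) psi0 G1 b (y ^ s)%g.

Lemma b2inv t x y : t \in G2 -> b2 (x ^ t)%g (y ^ t)%g = b2 x y.
Proof.
move=> Ht; rewrite /b2 /bt; congr (_ * _).
under eq_bigr do rewrite -!conjgM.
exact: (sum_mull (fun s => b (x ^ s)%g (y ^ s)%g) Ht).
Qed.

Lemma Psiinv t y : t \in G2 -> Psi (y ^ t)%g = Psi y.
Proof.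
move=> Ht; rewrite /Psi; congr (_ * _).
under eq_bigr do rewrite -!conjgM.
exact: (sum_mull (fun s => psi0 G1 b (y ^ s)%g) Ht).
Qed.

Lemma cb2 : cocycle2 G1 b2.
Proof.
apply: cc_scale; apply: cc_sum => s Hs; apply/ccE => x y z Hx Hy Hz.
rewrite /cexp !conjMg; apply: ((ccE _ _).1 cb); exact: memJ1.
Qed.

Lemma b2b : coboundary2 G1 (fun x y => b2 x y - b x y).
Proof.
have h1 := cb_scale u (cb_sum (fun s Hs => fb Hs)).
have h2 : coboundary2 G1 (fun x y => (#|G1|)%:R * b x y).
  by exists (psi0 G1 b) => x y Hx Hy; rewrite /qz_eq; apply: cb_order.
have h3 := cb_add h1 (cb_scale (- v) h2).
apply: cb_ext h3 => x y _ _; rewrite /qz_eq /b2 /bt /conj_cochain sumrB sumr_const.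
have -> : forall B : rat,
  u%:~R * (B - b x y *+ #|G2|) + (- v)%:~R * ((#|G1|)%:R * b x y) - (u%:~R * B - b x y)
  = (1 - (u%:~R * (#|G2|)%:R + v%:~R * (#|G1|)%:R)) * b x y.
  by move=> B; rewrite -mulr_natl intrN; ring.
by rewrite Euv subrr mul0r.
Qed.

Lemma b2ord x y : x \in G1 -> y \in G1 ->
  (#|G1|)%:R * b2 x y - dcb Psi x y \is a Num.int.
Proof.
move=> Hx Hy.
have -> : (#|G1|)%:R * b2 x y - dcb Psi x y = u%:~R *
   \sum_(s in G2) ((#|G1|)%:R * b (x ^ s)%g (y ^ s)%g - dcb (psi0 G1 b) (x ^ s)%g (y ^ s)%g).
  rewrite /dcb sum_lin /b2 /bt /Psi.
  have E : \sum_(s in G2) psi0 G1 b ((x * y) ^ s)%g = \sum_(s in G2) psi0 G1 b (x ^ s * y ^ s)%g.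
    by apply: eq_bigr => s _; rewrite conjMg.
  rewrite E; ring.
apply: rpredM; first exact: rpred_int.
by apply: rpred_sum => s Hs; apply: cb_order; rewrite ?memJ1.
Qed.

Definition bp g h := b2 (xg g) ((xg h) ^ (sg g)^-1)%g.
Definition cp g h := c (sg g) (sg h).
Definition aa g h := bp g h + cp g h.

Lemma cbp : cocycle2 G bp.
Proof.
apply/ccE => g h k Gg Gh Gk.
have Gs1 : ((sg g)^-1)%g \in G2 by rewrite groupV mem_sg.
have -> : cexp bp g h k = cexp b2 (xg g) ((xg h) ^ (sg g)^-1)%g ((xg k) ^ (sg g * sg h)^-1)%g.
  rewrite /cexp /bp xgM // sgM // xgM // conjMg.
  rewrite -(b2inv (xg h) _ Gs1) -conjgM -invMg.
  by rewrite !(invMg (sg g)) conjgM.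
apply: ((ccE _ _).1 cb2); rewrite ?mem_xg ?memJ1 ?mem_xg ?groupV ?groupM ?mem_sg //.
Qed.

Lemma ccp : cocycle2 G cp.
Proof.
apply/ccE => g h k Gg Gh Gk.
have -> : cexp cp g h k = cexp c (sg g) (sg h) (sg k) by rewrite /cexp /cp !sgM.
by apply: ((ccE _ _).1 cc); rewrite mem_sg.
Qed.

Lemma caa : cocycle2 G aa.
Proof. exact: cc_add cbp ccp. Qed.

Lemma bpG1 x y : x \in G1 -> y \in G1 -> bp x y = b2 x y.
Proof. by move=> Hx Hy; rewrite /bp sg1 // invg1 conjg1 !xg1. Qed.

Lemma bpG2 s t : s \in G2 -> t \in G2 -> bp s t = b2 1%g 1%g.
Proof. by move=> Hs Ht; rewrite /bp !xg2 // conj1g. Qed.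

Lemma cpG1 x y : x \in G1 -> y \in G1 -> cp x y = c 1%g 1%g.
Proof. by move=> Hx Hy; rewrite /cp !sg1. Qed.

Lemma cpG2 s t : s \in G2 -> t \in G2 -> cp s t = c s t.
Proof. by move=> Hs Ht; rewrite /cp !sg2. Qed.

Lemma bpord g h : g \in G -> h \in G ->
  (#|G1|)%:R * bp g h - dcb (fun z => Psi (xg z)) g h \is a Num.int.
Proof.
move=> Gg Gh; have Gs1 : ((sg g)^-1)%g \in G2 by rewrite groupV mem_sg.
rewrite /dcb xgM // -(Psiinv (xg h) Gs1) /bp.
by apply: b2ord; rewrite ?mem_xg ?memJ1 ?mem_xg.
Qed.

Lemma aaG1 : cohomologous G1 aa b.
Proof.
apply: cb_ext (cb_add b2b (cb_const G1 (c 1%g 1%g))) => x y Hx Hy.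
by rewrite /aa bpG1 // cpG1 // /qz_eq (_ : _ - _ = 0) // ; ring.
Qed.

Lemma aaG2 : cohomologous G2 aa c.
Proof.
apply: cb_ext (cb_const G2 (b2 1%g 1%g)) => x y Hx Hy.
by rewrite /aa bpG2 // cpG2 // /qz_eq (_ : _ - _ = 0) // ; ring.
Qed.

Lemma sgm_morph : {in G &, {morph sg : x y / (x * y)%g}}.
Proof. exact: sgM. Qed.

Definition sgm := @Morphism _ _ G sg sgm_morph.

Lemma aaB0 : inB0 G aa.
Proof.
move=> A sAG bA.
have sAG' := subsetP sAG.
have hbp : coboundary2 A bp.
  pose A1 := (A :&: G1)%G.
  have sA1G1 : A1 \subset G1 by apply: subsetIr.
  have sA1A : A1 \subset A by apply: subsetIl.
  have bA1 : coboundary2 A1 b by apply: b0 => //; exact: bicyclicS bA.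
  have h1 : coboundary2 A1 bp.
    apply: cb_ext (cb_add (cb_subset sA1G1 b2b) bA1) => x y Hx Hy.
    rewrite bpG1 ?(subsetP sA1G1) // /qz_eq (_ : _ - _ = 0) //; ring.
  have h2 := cb_index sA1A (cc_subset sAG cbp) h1.
  have h3 : coboundary2 A (fun x y => (#|G1|)%:R * bp x y).
    exists (fun z => Psi (xg z)) => x y Ax Ay; rewrite /qz_eq.
    by apply: bpord; apply: sAG'.
  apply: cb_coprime h2 h3.
  have dv : (#|A : A1| %| #|G2|)%N.
    rewrite /A1 /= indexgI -indexMg -norm_joinEr; last exact: subset_trans sAG nG1.
    rewrite -idx1; apply: indexSg; first exact: joing_subl.
    by rewrite join_subG sG1G.
  by apply: coprime_dvdl dv _; rewrite coprime_sym.
have hcp : coboundary2 A cp.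
  pose S := (sgm @* A)%G.
  have sSG2 : S \subset G2.
    apply/subsetP => z /morphimP [w Gw Aw ->]; exact: mem_sg.
  have [phi Hphi] : coboundary2 S c by apply: c0 => //; exact: bicyclic_morphim.
  exists (fun z => phi (sg z)) => x y Ax Ay.
  have Gx := sAG' x Ax; have Gy := sAG' y Ay.
  rewrite /cp sgM //; apply: Hphi.
    by have := mem_morphim sgm Gx Ax.
  by have := mem_morphim sgm Gy Ay.
exact: cb_add hbp hcp.
Qed.

End Surj.
Lemma main_sec :
  (forall a, cocycle2 G a -> inB0 G a ->
     [/\ inB0 G1 a, fixed_class G1 G2 a & inB0 G2 a]) /\
  (forall a b, cocycle2 G a -> inB0 G a -> cocycle2 G b -> inB0 G b ->
     cohomologous G1 a b -> cohomologous G2 a b -> cohomologous G a b) /\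
  (forall b c, cocycle2 G1 b -> inB0 G1 b -> fixed_class G1 G2 b ->
     cocycle2 G2 c -> inB0 G2 c ->
     exists a, [/\ cocycle2 G a, inB0 G a, cohomologous G1 a b & cohomologous G2 a c]).
Proof.
have _ := (nG1G, sG2G, tiG12, defG, cop).
split; [|split].
- move=> a ca ba; split.
  + by move=> A sA bA; apply: ba => //; exact: subset_trans sA sG1G.
  + by move=> g Hg; apply: conj_cb sG1G (subsetP sG2G g Hg) ca.
  + by move=> A sA bA; apply: ba => //; exact: subset_trans sA sG2G.
- by move=> a b ca _ cb' _ h1 h2; apply: part2.
- move=> b c cb b0 fb cc c0; exists (aa b c); split.
  + exact: caa.
  + exact: aaB0.
  + exact: aaG1.
  + exact: aaG2.
Qed.

End Main.

Local Open Scope group_scope.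
Theorem theorem1p5 (gT : finGroupType) (G G1 G2 : {group gT})
  (nG1G : G1 <| G) (sG2G : G2 \subset G) (tiG12 : G1 :&: G2 = 1)
  (defG : G1 * G2 = G) (cop : coprime #|G1| #|G2|) :
  (forall a, cocycle2 G a -> inB0 G a ->
     [/\ inB0 G1 a, fixed_class G1 G2 a & inB0 G2 a]) /\
  (forall a b, cocycle2 G a -> inB0 G a -> cocycle2 G b -> inB0 G b ->
     cohomologous G1 a b -> cohomologous G2 a b -> cohomologous G a b) /\
  (forall b c, cocycle2 G1 b -> inB0 G1 b -> fixed_class G1 G2 b ->
     cocycle2 G2 c -> inB0 G2 c ->
     exists a, [/\ cocycle2 G a, inB0 G a, cohomologous G1 a b & cohomologous G2 a c]).
Proof. exact: (main_sec nG1G sG2G tiG12 defG cop). Qed.
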